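(* Let $G$ be a graph containing a perfect matching $M$, and let $W$ be a shifted $M$-walk in $G$ with endpoints $a$ and $b$. Then $W$ contains a simple shifted $M$-walk $W'$ with endpoints $a$ and $b$.
   Context: Given a perfect matching $M$ in a graph $G$, a shifted $M$-walk with endpoints $a = v_1$ and $b = v_{2\ell}$ is a walk $v_1 v_2 \dots v_{2\ell}$ in $G$ such that $v_{2i}v_{2i+1} \in M$ for every $1 \leq i \leq \ell - 1$ and $v_{2i-1}v_{2i} \notin M$ for every $1 \leq i \leq \ell$. A shifted $M$-walk is simple if it contains each edge of $M$ at most twice. *)

(* Defs.v *)
From mathcomp Require Import all_boot all_order.
Set Implicit Arguments. Unset Strict Implicit. Unset Printing Implicit Defensive.

(* A (simple) graph on a finite vertex type V: a symmetric irreflexive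
   adjacency relation. Edges are unordered pairs, represented as 2-element
   sets [set u; v]. *)
Definition simple_graph (V : finType) (e : rel V) : Prop :=
  symmetric e /\ irreflexive e.

Definition perfect_matching (V : finType) (e : rel V) (M : {set {set V}}) : Prop :=
  (forall E, E \in M -> exists u v, e u v /\ E = [set u; v]) /\
  (forall x : V, #|[set E in M | x \in E]| = 1).

Definition walk_edges (V : finType) (s : seq V) : seq {set V} :=
  [seq [set p.1; p.2] | p <- zip s (behead s)].

(* s = v_1 ... v_{2l} (l >= 1) is a shifted M-walk in G with endpoints a, b:
   consecutive vertices adjacent in G, the i-th traversed edge (0-indexed)
   is in M iff i is odd (i.e. v_{2i}v_{2i+1} in M, v_{2i-1}v_{2i} not in M). *)
Definition shifted_walk (V : finType) (e : rel V) (M : {set {set V}})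
    (a b : V) (s : seq V) : Prop :=
  [/\ 0 < size s /\ ~~ odd (size s),
      head a s = a /\ last a s = b,
      path e a (behead s) &
      forall i, i < (size s).-1 ->
        (nth set0 (walk_edges s) i \in M) = odd i].

Definition simple_walk (V : finType) (M : {set {set V}}) (s : seq V) : Prop :=
  forall E, E \in M -> count_mem E (walk_edges s) <= 2.

Definition walk_contains (V : finType) (W W' : seq V) : Prop :=
  {subset walk_edges W' <= walk_edges W}.

(* Main.v *)
Require Import Defs.
From mathcomp Require Import all_boot all_order.
From mathcomp Require Import zify.

Section Aux.
Variable V : finType.

Lemma we_size (s : seq V) : size (walk_edges s) = (size s).-1.
Proof. rewrite /walk_edges size_map size_zip size_behead; lia. Qed.

Lemma we_nth (s : seq V) x0 i : i < (size s).-1 ->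
  nth set0 (walk_edges s) i = [set nth x0 s i; nth x0 s i.+1].
Proof.
move=> hi.
have hz : i < size (zip s (behead s)) by rewrite size_zip size_behead; lia.
rewrite /walk_edges (nth_map (x0, x0)) // nth_zip_cond hz /= nth_behead //.
Qed.

Lemma swP e M a b (s : seq V) : shifted_walk e M a b s <->
  [/\ 0 < size s /\ ~~ odd (size s), nth a s 0 = a /\ nth a s (size s).-1 = b,
     (forall i, i.+1 < size s -> e (nth a s i) (nth a s i.+1)) &
     (forall i, i.+1 < size s -> ([set nth a s i; nth a s i.+1] \in M) = odd i)].
Proof.
rewrite /shifted_walk nth_last nth0.
case: s => [|x t] /=.
  split; case; case=> //.
split.
- case=> h1 [h2 h3] h4 h5; subst x; split => //.
  + move=> i hi; move/(pathP a): h4 => /(_ i); apply; lia.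
  + move=> i hi; rewrite -(we_nth (a :: t) a) ?h5 //= ; lia.
- case=> h1 [h2 h3] h4 h5; subst x; split => //.
  + apply/(pathP a) => i hi; apply: h4; lia.
  + move=> i hi; rewrite (we_nth (a :: t) a) ?h5 //=; lia.
Qed.

Lemma contains_trans (s1 s2 s3 : seq V) :
  walk_contains s1 s2 -> walk_contains s2 s3 -> walk_contains s1 s3.
Proof. by move=> h1 h2 x /h2 /h1. Qed.

Lemma count_le (M : {set {set V}}) a (s : seq V) :
  (forall i j, i < j < size s -> odd i -> odd j -> nth a s i != nth a s j) ->
  (forall i, i.+1 < size s -> ([set nth a s i; nth a s i.+1] \in M) = odd i) ->
  simple_walk M s.
Proof.
move=> hd hm E EM.
set l := walk_edges s.
have -> : count_mem E l = count (fun i => nth set0 l i == E) (iota 0 (size l)).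
  by rewrite -{1}(mkseq_nth set0 l) /mkseq count_map.
rewrite -size_filter.
set F := filter _ _.
have hF : forall i, i \in F -> [/\ i < (size s).-1, odd i, nth a s i \in E & E = [set nth a s i; nth a s i.+1]].
  move=> i; rewrite mem_filter mem_iota add0n /l we_size => /andP [/eqP h1 h2].
  rewrite (we_nth s a) // in h1.
  have h3 : i.+1 < size s by lia.
  have := hm i h3; rewrite h1 EM => h4; split => //.
  by rewrite -h1 !inE eqxx.
have -> : size F = size (map (nth a s) F) by rewrite size_map.
have hu : uniq (map (nth a s) F).
  rewrite map_inj_in_uniq ?filter_uniq ?iota_uniq //.
  move=> i j /hF [hi oi _ _] /hF [hj oj _ _] heq.
  case: (ltngtP i j) => // hij.
    have := hd i j ltac:(lia) oi oj; by rewrite heq eqxx.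
  have := hd j i ltac:(lia) oj oi; by rewrite heq eqxx.
rewrite -(card_uniqP hu).
case hF0 : F => [|i0 F'].
  by rewrite card0.
have : i0 \in F by rewrite hF0 inE eqxx.
move=> /hF [_ _ _ hE].
apply: leq_trans (_ : #|E| <= 2).
  apply: subset_leq_card; apply/subsetP => x; rewrite -hF0 => /mapP [k /hF [_ _ hk _] ->].
  done.
by rewrite hE cards2; case: (_ != _).
Qed.

Lemma cut_nth a (s : seq V) i j k : i < j < size s -> odd i -> odd j ->
  nth a s i = nth a s j -> k.+1 < size (take i s ++ drop j s) ->
  exists k', [/\ k'.+1 < size s, odd k' = odd k,
    nth a (take i s ++ drop j s) k = nth a s k' &
    nth a (take i s ++ drop j s) k.+1 = nth a s k'.+1].
Proof.
move=> hij oi oj heq.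
rewrite size_cat size_drop size_takel; last lia.
move=> hk; rewrite !nth_cat size_takel; last lia.
case: (ltnP k.+1 i) => h1.
  exists k; rewrite (ltnW h1) (nth_take _ (ltnW h1)) (nth_take _ h1).
  split => //; lia.
case: (ltnP k i) => h2.
  have hki : k.+1 = i by lia.
  exists k; rewrite hki subnn nth_take // nth_drop addn0 -heq; split => //; lia.
exists (j + (k - i)); rewrite !nth_drop; split.
- lia.
- lia.
- done.
- congr nth; lia.
Qed.

Lemma cut_ok e M a b (s : seq V) i j : shifted_walk e M a b s ->
  i < j < size s -> odd i -> odd j -> nth a s i = nth a s j ->
  [/\ shifted_walk e M a b (take i s ++ drop j s),
      walk_contains s (take i s ++ drop j s) &
      size (take i s ++ drop j s) < size s].
Proof.
move=> /swP [[h0 hev] [hh hl] hp hm] hij oi oj heq.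
set s' := take i s ++ drop j s.
have hs' : size s' = i + (size s - j).
  by rewrite size_cat size_drop size_takel //; lia.
have hc := fun k => @cut_nth a s i j k hij oi oj heq.
split.
- apply/swP; split.
  + rewrite hs'; split; lia.
  + split.
      rewrite /s' nth_cat size_takel; last lia.
      rewrite ifT; last lia.
      by rewrite nth_take //; lia.
    rewrite /s' nth_cat size_takel; last lia.
    rewrite -/s' hs' ifF; last lia.
    rewrite nth_drop -hl; congr nth; lia.
  + move=> k hk; have [k' [h1 h2 -> ->]] := hc k hk; exact: hp.
  + move=> k hk; have [k' [h1 h2 -> ->]] := hc k hk; rewrite -h2; exact: hm.
- move=> E /(nthP set0) [k]; rewrite we_size => hk.
  rewrite (we_nth _ a) // => <-.
  have hk2 : k.+1 < size s' by lia.
  have [k' [h1 h2 -> ->]] := hc k hk2.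
  apply/(nthP set0); exists k'; first by rewrite we_size; lia.
  by rewrite (we_nth _ a) //; lia.
- rewrite hs'; lia.
Qed.

End Aux.

Theorem lemma5p1 (V : finType) (e : rel V) (M : {set {set V}}) (a b : V)
    (W : seq V) :
  simple_graph e -> perfect_matching e M -> shifted_walk e M a b W ->
  exists W' : seq V,
    [/\ shifted_walk e M a b W', simple_walk M W' & walk_contains W W'].
Proof.
move=> _ _.
have : size W <= size W by [].
move: {2}(size W) => n.
elim: n W => [|n IH] W hn hW.
  by have [[h0 _] _ _ _] := hW; lia.
case: (boolP [exists i : 'I_(size W), exists j : 'I_(size W),
   [&& i < j, odd i, odd j & nth a W i == nth a W j]]).
- move=> /existsP [i] /existsP [j] /and4P [hij oi oj /eqP heq].
  have hij' : i < j < size W by rewrite hij ltn_ord.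
  have [h1 h2 h3] := @cut_ok V e M a b W i j hW hij' oi oj heq.
  have hn' : size (take i W ++ drop j W) <= n by lia.
  have [W' [h4 h5 h6]] := IH _ hn' h1.
  exists W'; split => //; exact: (@contains_trans V _ _ _ h2 h6).
- move=> hne; exists W; split => //.
  have /swP [_ _ _ hm] := hW.
  apply: (@count_le V M a W) => // i j hij oi oj.
  apply/negP => /eqP heq; move/negP: hne; apply.
  have hi : i < size W by lia.
  have hj : j < size W by lia.
  apply/existsP; exists (Ordinal hi).
  apply/existsP; exists (Ordinal hj).
  rewrite /= oi oj heq eqxx andbT; lia.
Qed.
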